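(* Let $n$ be a positive integer and let $\frac{a_1}{b_1} < \frac{a_2}{b_2} < \cdots$ be the Farey sequence of order $n$. Let $k \le l$ be indices and let $\frac{a}{b}$ (in lowest terms) be a fraction of the Farey sequence of order $n$ with $\frac{a_k}{b_k} \le \frac{a}{b} \le \frac{a_l}{b_l}$. If $l - k \le \frac{n+b+1}{2b}$, then $(a_l - a_k)(b_l - b_k) \ge 0$.
   Context: The Farey sequence of order $n$ is the increasing list of all reduced fractions $\frac{a}{b}$ with $0 \le \frac{a}{b} \le 1$ and $1 \le b \le n$ (including $\frac01$ and $\frac11$), each written in lowest terms, indexed in increasing order. Two fractions $\frac{a}{b}, \frac{a'}{b'}$ in lowest terms are called similarly ordered if $(a'-a)(b'-b) \ge 0$. *)

(* Defs.v *)
From mathcomp Require Import all_boot all_order all_algebra.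
Set Implicit Arguments. Unset Strict Implicit. Unset Printing Implicit Defensive.
Import Order.TTheory GRing.Theory Num.Theory.

(* A fraction a/b is represented by the pair (a, b) of naturals. *)
Definition frac_val (p : nat * nat) : rat := (p.1%:R / p.2%:R)%R.

Definition frac_le (p q : nat * nat) : bool := (p.1 * q.2 <= q.1 * p.2)%N.

Definition farey_set (n : nat) : seq (nat * nat) :=
  [seq p <- [seq (a, b) | b <- iota 1 n, a <- iota 0 b.+1] | coprime p.1 p.2].

(* The Farey sequence of order n, listed in increasing order
   (index 0 here corresponds to index 1 in the paper). *)
Definition farey (n : nat) : seq (nat * nat) := sort frac_le (farey_set n).

(* Main.v *)
Require Import Defs.
From mathcomp Require Import all_boot all_order all_algebra zify.
Import Order.TTheory GRing.Theory Num.Theory.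
Set Implicit Arguments. Unset Strict Implicit.

Definition valid n (p : nat * nat) := [&& 0 < p.2, p.2 <= n, p.1 <= p.2 & coprime p.1 p.2].

Lemma mem_farey n p : (p \in farey n) = valid n p.
Proof.
rewrite /farey mem_sort mem_filter /valid.
case: p => c d.
apply/andP/and4P.
  case=> cop H; have [y [x [Hy Hx E]]] := @allpairsPdep _ _ _ _ _ _ _ H; case: E => ? ?; subst.
  move: Hy Hx; rewrite !mem_iota => /andP[H1 H2] /andP[H3 H4].
  split=> //=; lia.
case=> /= H1 H2 H3 H4; split=> //.
apply: (introT (@allpairsPdep nat (fun _ => nat) _ (fun b a => (a,b)) (iota 1 n) (fun b => iota 0 b.+1) (c,d))); exists d, c; split=> //; rewrite mem_iota /=; lia.
Qed.

Lemma farey_uniq n : uniq (farey n).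
Proof.
rewrite /farey sort_uniq filter_uniq // allpairs_uniq_dep //.
- exact: iota_uniq.
- by move=> i _; exact: iota_uniq.
- by move=> [x1 y1] [x2 y2] _ _ [-> ->].
Qed.

Lemma farey_sorted n : sorted frac_le (farey n).
Proof. apply: sort_sorted => p q; rewrite /frac_le; exact: leq_total. Qed.

Lemma red_eq x y x' y' : 0 < y -> 0 < y' -> coprime x y -> coprime x' y' ->
  x * y' = x' * y -> (x, y) = (x', y').
Proof.
move=> y0 y0' c1 c2 E.
have d1 : y %| y'.
  have : y %| x * y' by rewrite E dvdn_mull.
  by rewrite Gauss_dvdr // coprime_sym.
have d2 : y' %| y.
  have : y' %| x' * y by rewrite -E dvdn_mull.
  by rewrite Gauss_dvdr // coprime_sym.
have ey : y = y' by apply/eqP; rewrite eqn_leq; apply/andP; split; exact: dvdn_leq.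
subst y'. have : x = x' by apply/eqP; rewrite -(eqn_pmul2r y0) E. by move=> ->.
Qed.

Lemma mono n i j : i < j -> j < size (farey n) ->
  (nth (0,1) (farey n) i).1 * (nth (0,1) (farey n) j).2 <
  (nth (0,1) (farey n) j).1 * (nth (0,1) (farey n) i).2.
Proof.
move=> ij js.
have is_ : i < size (farey n) by apply: ltn_trans js.
have vi : valid n (nth (0,1) (farey n) i) by rewrite -mem_farey mem_nth.
have vj : valid n (nth (0,1) (farey n) j) by rewrite -mem_farey mem_nth.
have le : frac_le (nth (0,1) (farey n) i) (nth (0,1) (farey n) j).
  apply: (@sorted_ltn_nth_in _ (valid n)) => //.
  - move=> [x2 y2] [x1 y1] [x3 y3]; rewrite /valid /frac_le /= => /and4P[? _ _ _] /and4P[? _ _ _] /and4P[? _ _ _] h1 h2.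
    have := leq_mul h1 (leqnn y3); have := leq_mul h2 (leqnn y1) => A B.
    rewrite -(@leq_pmul2l y2) //; nia.
  - by apply/allP => p; rewrite mem_farey.
  - exact: farey_sorted.
have ne : nth (0,1) (farey n) i != nth (0,1) (farey n) j.
  by rewrite nth_uniq ?farey_uniq // neq_ltn ij.
move: vi vj le ne; case: (nth _ _ i) => x1 y1; case: (nth _ _ j) => x2 y2.
rewrite /valid /frac_le /= => /and4P[p1 _ _ c1] /and4P[p2 _ _ c2] le ne.
rewrite ltn_neqAle le andbT; apply/eqP => E.
by move: ne; rewrite (red_eq p1 p2 c1 c2 E) ?eqxx.
Qed.

Lemma mono_le n i j : i <= j -> j < size (farey n) ->
  (nth (0,1) (farey n) i).1 * (nth (0,1) (farey n) j).2 <=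
  (nth (0,1) (farey n) j).1 * (nth (0,1) (farey n) i).2.
Proof.
rewrite leq_eqVlt => /orP[/eqP -> //|ij js]; exact/ltnW/mono.
Qed.

Lemma idx_le n i j : i < size (farey n) -> j < size (farey n) ->
  (nth (0,1) (farey n) j).1 * (nth (0,1) (farey n) i).2 <=
  (nth (0,1) (farey n) i).1 * (nth (0,1) (farey n) j).2 -> j <= i.
Proof.
move=> is_ js h; rewrite leqNgt; apply/negP => ij.
by have := mono ij js; rewrite ltnNge h.
Qed.

Lemma consec n x1 y1 x2 y2 : (x1, y1) \in farey n -> (x2, y2) \in farey n ->
  x2 * y1 = x1 * y2 + 1 -> n < y1 + y2 ->
  index (x2, y2) (farey n) = (index (x1, y1) (farey n)).+1.
Proof.
move=> m1 m2 det big.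
set i1 := index (x1, y1) (farey n); set i2 := index (x2, y2) (farey n).
have s1 : i1 < size (farey n) by rewrite index_mem.
have s2 : i2 < size (farey n) by rewrite index_mem.
have e1 : nth (0,1) (farey n) i1 = (x1, y1) by rewrite nth_index.
have e2 : nth (0,1) (farey n) i2 = (x2, y2) by rewrite nth_index.
have lt : i1 < i2.
  rewrite ltnNge; apply/negP => h; have := mono_le h s1.
  rewrite e1 e2 /=; lia.
apply/eqP; rewrite eqn_leq lt andbT leqNgt; apply/negP => h.
have sm : i1.+1 < size (farey n) by apply: ltn_trans s2.
have := mono (ltnSn i1) sm; have := mono h s2.
have : valid n (nth (0,1) (farey n) i1.+1) by rewrite -mem_farey mem_nth.
rewrite e1 e2 /valid; case: (nth _ _ i1.+1) => c d /= /and4P[d0 dn _ _] A B.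
nia.
Qed.

Lemma rep b n t : 0 < b -> t <= n ->
  exists q, n < b + (t + b * q) /\ t + b * q <= n.
Proof.
move=> b0 tn; exists ((n - t) %/ b).
have := divn_eq (n - t) b; have := ltn_pmod (n - t) b0.
move: ((n - t) %/ b) ((n - t) %% b) => q r.
rewrite [q * b]mulnC; lia.
Qed.

Lemma right_nb n a b : a < b -> coprime a b -> b <= n ->
  exists a' b', b * a' = a * b' + 1 /\ n < b + b' /\ b' <= n.
Proof.
move=> ab cop bn.
have b0 : 0 < b by lia.
have [t tb dv] := Bezoutl a b0.
move: dv; rewrite gcdnC (eqP cop) => /dvdnP [K EK].
have [q [h1 h2]] := rep b0 (ltnW (leq_trans tb bn)).
exists (K + a * q), (t + b * q); split => //.
nia.
Qed.

Lemma left_nb n a b : 0 < a -> a <= b -> coprime a b -> b <= n ->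
  exists a'' b'', a * b'' = b * a'' + 1 /\ n < b + b'' /\ b'' <= n.
Proof.
move=> a0 ab cop bn.
have b0 : 0 < b by lia.
have [t tb dv] := Bezoutl a b0.
move: dv; rewrite gcdnC (eqP cop) => /dvdnP [K EK].
have [q [h1 h2]] := rep b0 (leq_trans (leq_subr t b) bn).
have Kb : K <= a.
  have : K * b <= a * b by rewrite -EK; nia.
  by rewrite leq_pmul2r.
exists (a - K + a * q), (b - t + b * q); split => //.
have : a * (b - t) = (a - K) * b + 1.
  rewrite mulnBr mulnBl -EK; nia.
nia.
Qed.

Lemma det_cop u v x y : u * x = v * y + 1 -> coprime x y.
Proof.
move=> E; rewrite /coprime -dvdn1.
have h1 : gcdn x y %| u * x by apply: dvdn_mull; exact: dvdn_gcdl.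
have h2 : gcdn x y %| v * y by apply: dvdn_mull; exact: dvdn_gcdr.
by move: h1; rewrite E dvdn_addr.
Qed.

Lemma det_cop' u v x y : u * y = v * x + 1 -> coprime x y.
Proof. by move=> E; rewrite coprime_sym; exact: (det_cop E). Qed.

Lemma right_chain n a b a' b' beta :
  (a, b) \in farey n -> a < b ->
  b * a' = a * b' + 1 -> n < b + b' -> b' <= n ->
  (2 * b * beta <= n + b + 1) ->
  forall j, j < beta -> exists c d, [/\ (c, d) \in farey n,
    index (c, d) (farey n) = (index (a, b) (farey n)).+1 + j,
    b * c = a * d + 1 & d + j * b = b'].
Proof.
move=> w ab E1 E2 E3 hb; rewrite mem_farey /valid /= in w.
case/and4P: w => b0 bn _ cop.
elim=> [|j IH] hj.
  exists a', b'; have m : (a', b') \in farey n.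
    rewrite mem_farey /valid /=; apply/and4P; split => //; first lia.
      nia.
    exact: (det_cop E1).
  split => //; last lia.
  have w' : (a, b) \in farey n by rewrite mem_farey /valid /= b0 bn cop ltnW.
  rewrite (consec w' m) ?addn0 //; lia.
have [c [d [m id E4 E5]]] := IH (ltnW hj).
have db : b < d by nia.
have ca : a <= c by nia.
move: m id E4 E5; rewrite -(subnK db) -(subnK ca).
move: (d - b.+1) (c - a) => d' c' m id E4 E5.
have m' : (c', d'.+1) \in farey n.
  rewrite mem_farey /valid; apply/and4P; split => //=.
  - move: m; rewrite mem_farey => /and4P[_ /= ? _ _]; lia.
  - nia.
  - by apply: (det_cop (u := b) (v := a)); nia.
exists c', d'.+1; split => //; last nia.
rewrite (consec m m') ?id ?addnS //. all: nia.
Qed.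

Lemma left_chain n a b a'' b'' alpha :
  (a, b) \in farey n -> 0 < a ->
  a * b'' = b * a'' + 1 -> n < b + b'' -> b'' <= n ->
  (2 * b * alpha <= n + b + 1) ->
  forall j, j < alpha -> exists c d, [/\ (c, d) \in farey n,
    (index (c, d) (farey n)).+1 + j = index (a, b) (farey n),
    a * d = b * c + 1 & d + j * b = b''].
Proof.
move=> w a0 E1 E2 E3 hb; have w' := w; rewrite mem_farey /valid /= in w.
case/and4P: w => b0 bn ab cop.
elim=> [|j IH] hj.
  exists a'', b''; have m : (a'', b'') \in farey n.
    rewrite mem_farey /valid; apply/and4P; split => //=; first lia.
      nia.
    exact: (det_cop' E1).
  split => //; last lia.
  rewrite (consec m w') ?addn0 //; nia.
have [c [d [m id E4 E5]]] := IH (ltnW hj).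
have db : b < d by nia.
have ca : a <= c by nia.
move: m id E4 E5; rewrite -(subnK db) -(subnK ca).
move: (d - b.+1) (c - a) => d' c' m id E4 E5.
have m' : (c', d'.+1) \in farey n.
  rewrite mem_farey /valid; apply/and4P; split => //=.
  - move: m; rewrite mem_farey => /and4P[_ /= ? _ _]; lia.
  - nia.
  - by apply: (det_cop' (u := a) (v := b)); nia.
exists c', d'.+1; split => //; last nia.
rewrite -id (consec m' m) ?addnS ?addSn //.
all: nia.
Qed.

Lemma fv_le x y u v : 0 < y -> 0 < v ->
  (frac_val (x, y) <= frac_val (u, v))%R -> x * v <= u * y.
Proof.
move=> y0 v0; rewrite /frac_val /= ler_pdivrMr ?ltr0n // mulrAC ler_pdivlMr ?ltr0n //.
by rewrite -!natrM ler_nat.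
Qed.

Lemma bound_le m n b : 0 < b ->
  ((m%:R : rat) <= (n + b + 1)%:R / (2 * b)%:R)%R -> 2 * b * m <= n + b + 1.
Proof.
move=> b0; rewrite ler_pdivlMr ?ltr0n ?muln_gt0 //.
by rewrite -natrM ler_nat mulnC.
Qed.

Lemma final x y u v : (x <= u /\ y <= v) \/ (u <= x /\ v <= y) ->
  (0 <= (u%:Z - x%:Z) * (v%:Z - y%:Z))%R.
Proof.
case=> [[h1 h2]|[h1 h2]].
  by apply: mulr_ge0; rewrite subr_ge0 lez_nat.
by apply: mulr_le0; rewrite subr_le0 lez_nat.
Qed.

Unset Implicit Arguments.

Theorem lemma4 (n k l a b : nat) :
  (0 < n)%N ->
  (k <= l)%N -> (l < size (farey n))%N ->
  (a, b) \in farey n ->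
  (frac_val (nth (0, 1) (farey n) k) <= frac_val (a, b))%R ->
  (frac_val (a, b) <= frac_val (nth (0, 1) (farey n) l))%R ->
  ((l - k)%:R <= (n + b + 1)%:R / (2 * b)%:R :> rat)%R ->
  (0 <= ((nth (0, 1) (farey n) l).1%:Z - (nth (0, 1) (farey n) k).1%:Z)
        * ((nth (0, 1) (farey n) l).2%:Z - (nth (0, 1) (farey n) k).2%:Z))%R.
Proof.
move=> n0 kl ls w H1 H2 H3.
have w' := w; rewrite mem_farey /valid /= in w'.
case/and4P: w' => b0 bn ab cop.
have hb := bound_le b0 H3.
set i := index (a, b) (farey n).
have is_ : i < size (farey n) by rewrite index_mem.
have ei : nth (0,1) (farey n) i = (a, b) by rewrite nth_index.
have ks : k < size (farey n) by apply: leq_ltn_trans ls.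
have vk : valid n (nth (0,1) (farey n) k) by rewrite -mem_farey mem_nth.
have vl : valid n (nth (0,1) (farey n) l) by rewrite -mem_farey mem_nth.
have ki : k <= i.
  apply: (@idx_le n) => //; rewrite ei /=.
  move: H1 vk; case: (nth _ _ k) => x y /= H1 /and4P[y0 _ _ _]; exact: fv_le.
have il : i <= l.
  apply: (@idx_le n) => //; rewrite ei /=.
  move: H2 vl; case: (nth _ _ l) => u v /= H2 /and4P[v0 _ _ _]; exact: fv_le.
have R : nth (0,1) (farey n) l = (a, b) \/
         exists u v, [/\ nth (0,1) (farey n) l = (u, v), b * u = a * v + 1, 0 < v & a < b].
  case: (ltnP i l) => [il'|li]; last by left; have -> : l = i by apply/eqP; rewrite eqn_leq li il.
  right.
  have ab' : a < b.
    rewrite ltn_neqAle ab andbT; apply/eqP => E; subst a.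
    have := mono il' ls; rewrite ei /=.
    move: vl; case: (nth _ _ l) => u v /= /and4P[_ _ uv _]; move: uv => /= uv; nia.
  have [a' [b' [E1 [E2 E3]]]] := right_nb ab' cop bn.
  have [||c [d [m id E4 E5]]] := @right_chain n a b a' b' (l - i) w ab' E1 E2 E3 _ (l - i).-1.
  - by rewrite mulnBr; nia.
  - lia.
  exists c, d; split => //.
    by rewrite -(nth_index (0,1) m) id; congr nth; rewrite -/i; lia.
  by move: m; rewrite mem_farey => /and4P[].
have L : nth (0,1) (farey n) k = (a, b) \/
         exists x y, [/\ nth (0,1) (farey n) k = (x, y), a * y = b * x + 1, 0 < y & 0 < a].
  case: (ltnP k i) => [ki'|ik]; last by left; have -> : k = i by apply/eqP; rewrite eqn_leq ik ki.
  right.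
  have a0 : 0 < a.
    rewrite lt0n; apply/eqP => E; subst a.
    have := mono ki' is_; rewrite ei /=.
    move: vk; case: (nth _ _ k) => x y /= /and4P[_ _ _ _]; nia.
  have [a'' [b'' [E1 [E2 E3]]]] := left_nb a0 ab cop bn.
  have [||c [d [m id E4 E5]]] := @left_chain n a b a'' b'' (i - k) w a0 E1 E2 E3 _ (i - k).-1.
  - rewrite mulnBr; nia.
  - lia.
  exists c, d; split => //.
    by rewrite -(nth_index (0,1) m); congr nth; move: id; rewrite -/i; lia.
  by move: m; rewrite mem_farey => /and4P[].
apply: final.
case: R => [->|[u [v [-> Eu v0 ab']]]]; case: L => [->|[x [y [-> Ex y0 a0]]]] /=.
- by left.
- case: (leqP y b) => h; [left|right]; split => //; nia.
- case: (leqP b v) => h; [left|right]; split => //; try lia; nia.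
- case: (leqP y v) => h; [left|right]; split => //; try lia; nia.
Qed.
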